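(* Let $\pi\in\mathcal{S}_n$ be a Schröder permutation. Then for every $k\ge1$, $\pi$ avoids the pattern $12\cdots k$ if and only if $\phi(\pi)$ avoids $12\cdots k$.
   Context: A permutation avoids $\tau\in\mathcal{S}_k$ if no subsequence of length $k$ is in the same relative order as $\tau$; $12\cdots k$ is the increasing pattern of length $k$. A Schröder permutation is one avoiding both $1243$ and $2143$. Represent $\pi\in\mathcal{S}_n$ by an $n\times n$ array, rows $i$ numbered top to bottom, columns $j$ left to right, with a dot in square $(i,\pi_i)$. The diagram $D(\pi)$ is the set of squares $(i,j)$ with $\pi_i>j$ and $\pi^{-1}(j)>i$. The essential set $\mathcal{E}(\pi)$ is the set of $(i,j)\in D(\pi)$ with $(i+1,j)\notin D(\pi)$ and $(i,j+1)\notin D(\pi)$ (squares outside the array count as not in $D(\pi)$). The rank of $(i,j)$ with respect to $\pi$ is $\rho_\pi(i,j)=\#\{k<i:\pi_k<j\}$; $\mathcal{E}_r(\pi)$ is the set of elements of $\mathcal{E}(\pi)$ of rank $r$. A permutation is uniquely determined by its essential set together with the ranks of its elements (Fulton). For a Schröder permutation $\pi\in\mathcal{S}_n$, let $\mathcal{E}^*(\pi)$ be obtained from $\mathcal{E}(\pi)$ by replacing each $(i,j)\in\mathcal{E}_1(\pi)$ by $(i-1,j-1)$; there is a unique $\sigma\in\mathcal{S}_n$ with $\mathcal{E}(\sigma)=\mathcal{E}^*(\pi)$ and all elements of $\mathcal{E}(\sigma)$ of rank $0$ (with respect to $\sigma$), and $\phi(\pi):=\sigma$ (a $132$-avoiding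 permutation). *)

(* Defs.v *)
From mathcomp Require Import all_boot all_fingroup.
Set Implicit Arguments. Unset Strict Implicit. Unset Printing Implicit Defensive.

(* Conventions: rows and columns are 0-based ('I_n); row i holds a dot in
   column s i.  All comparisons are on the underlying nat values. *)

Definition contains (n : nat) (s : 'S_n) (p : seq nat) : Prop :=
  exists f : 'I_(size p) -> 'I_n,
    (forall a b : 'I_(size p), a < b -> f a < f b) /\
    (forall a b : 'I_(size p), (s (f a) < s (f b)) = (nth 0 p a < nth 0 p b)).

Definition avoids (n : nat) (s : 'S_n) (p : seq nat) : Prop := ~ contains s p.

Definition incr_pat (k : nat) : seq nat := iota 1 k.

Definition schroder (n : nat) (s : 'S_n) : Prop :=
  avoids s [:: 1; 2; 4; 3] /\ avoids s [:: 2; 1; 4; 3].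

Definition diagram (n : nat) (s : 'S_n) : {set 'I_n * 'I_n} :=
  [set x : 'I_n * 'I_n | (x.2 < s x.1) && (x.1 < (s^-1)%g x.2)].

(* membership of a nat pair in the diagram (false outside the array) *)
Definition inD (n : nat) (s : 'S_n) (i j : nat) : bool :=
  [exists x in diagram s, (x.1 == i :> nat) && (x.2 == j :> nat)].

Definition ess (n : nat) (s : 'S_n) : {set 'I_n * 'I_n} :=
  [set x in diagram s | ~~ inD s x.1.+1 x.2 && ~~ inD s x.1 x.2.+1].

Definition rank (n : nat) (s : 'S_n) (x : 'I_n * 'I_n) : nat :=
  #|[set k : 'I_n | (k < x.1) && (s k < x.2)]|.

Definition shift_ess (n : nat) (s : 'S_n) (x : 'I_n * 'I_n) : nat * nat :=
  if rank s x == 1 then ((x.1 : nat).-1, (x.2 : nat).-1) else ((x.1 : nat), (x.2 : nat)).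

Definition ess_star (n : nat) (s : 'S_n) : {set 'I_n * 'I_n} :=
  [set y : 'I_n * 'I_n | [exists x in ess s, shift_ess s x == ((y.1 : nat), (y.2 : nat))]].

Definition phi_spec (n : nat) (p sg : 'S_n) : bool :=
  (ess sg == ess_star p) && [forall x in ess sg, rank sg x == 0].

Definition phi (n : nat) (p : 'S_n) : 'S_n :=
  odflt 1%g [pick sg | phi_spec p sg].

(* Main.v *)
Require Import Defs.
From mathcomp Require Import all_boot all_fingroup zify.
Set Implicit Arguments. Unset Strict Implicit. Unset Printing Implicit Defensive.


Section General.
Variable n : nat.
Implicit Types s : 'S_n.

Definition Dg s (x y : 'I_n) := (y < s x) && (x < (s^-1)%g y).

Lemma inD_ord s (x y : 'I_n) : inD s x y = Dg s x y.
Proof.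
rewrite /inD; apply/existsP/idP.
- case=> [[a b]] /andP[]; rewrite inE /= => Hd /andP[/eqP e1 /eqP e2].
  have -> : x = a by apply: val_inj.
  have -> : y = b by apply: val_inj.
  exact Hd.
- move=> H; exists (x, y); rewrite inE /=; apply/andP; split; [exact H|by rewrite !eqxx].
Qed.

Lemma inDP s (i j : nat) :
  reflect (exists x y : 'I_n, [/\ (x : nat) = i, (y : nat) = j & Dg s x y]) (inD s i j).
Proof.
apply: (iffP existsP).
- case=> [[a b]] /andP[]; rewrite inE /= => Hd /andP[/eqP e1 /eqP e2].
  by exists a, b.
- case=> x [y [e1 e2 Hd]]; exists (x, y); rewrite inE /=; apply/andP; split; [exact Hd|by rewrite e1 e2 !eqxx].
Qed.

Lemma permVK s (x : 'I_n) : s ((s^-1)%g x) = x.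
Proof. by rewrite permKV. Qed.
Lemma permKV' s (x : 'I_n) : (s^-1)%g (s x) = x.
Proof. by rewrite permK. Qed.

Definition rk s (i j : nat) := #|[set k : 'I_n | (k < i) && (s k < j)]|.

Lemma rank_rk s x : rank s x = rk s x.1 x.2.
Proof. by []. Qed.

Lemma rk_mono s i j i' j' : i <= i' -> j <= j' -> rk s i j <= rk s i' j'.
Proof.
move=> hi hj; apply: subset_leq_card; apply/subsetP => k; rewrite !inE.
case/andP => h1 h2; apply/andP; split; lia.
Qed.

Lemma rk_stepr s (x : 'I_n) j : rk s x.+1 j = (s x < j) + rk s x j.
Proof.
rewrite /rk (cardsD1 x) inE ltnSn /=; congr (_ + _); apply: eq_card => k.
rewrite !inE.
case: (eqVneq k x) => [->|hne] /=; first by rewrite ltnn.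
have : (k : nat) != x by [].

rewrite ltnS leq_eqVlt; case: (val k == val x) => //=.
Qed.

Lemma rk_stepc s i (y : 'I_n) : rk s i y.+1 = ((s^-1)%g y < i) + rk s i y.
Proof.
rewrite /rk (cardsD1 ((s^-1)%g y)) inE permVK ltnSn andbT; congr (_ + _); apply: eq_card => k.
rewrite !inE.
case: (eqVneq k ((s^-1)%g y)) => [->|hne] /=; first by rewrite permVK ltnn andbF.
have : (s k : nat) != y.
  apply/negP => /eqP /val_inj e; move: hne; rewrite -e permKV' eqxx //.
move=> h; apply/idP/idP => /andP[h1 h2]; apply/andP; split; lia.
Qed.

Lemma rk0 s j : rk s 0 j = 0.
Proof. apply/eqP; rewrite cards_eq0; apply/eqP/setP => k; rewrite !inE //. Qed.

Lemma ess_mem s (e : 'I_n * 'I_n) :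
  (e \in ess s) = [&& Dg s e.1 e.2, ~~ inD s e.1.+1 e.2 & ~~ inD s e.1 e.2.+1].
Proof. by rewrite /ess !inE. Qed.

Lemma walk_aux s m : forall x y : 'I_n, 2 * n - (x + y) <= m -> Dg s x y ->
  exists e, [/\ e \in ess s, x <= e.1, y <= e.2 & rk s e.1 e.2 = rk s x y].
Proof.
elim: m => [|m IH] x y hm hD.
  exfalso; move: (ltn_ord x) (ltn_ord y); lia.
case hd: (inD s x.+1 y).
  case/inDP: hd => x' [y' [e1 e2 hD']].
  have ey : y' = y by apply: val_inj.
  subst y'.
  have [e [he h1 h2 hr]] := IH x' y ltac:(lia) hD'.
  exists e; split => //; first lia.
  rewrite hr e1 rk_stepr; move: hD => /andP[h _].
  by rewrite (_ : (s x < y) = false) //; lia.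
case hr: (inD s x y.+1).
  case/inDP: hr => x' [y' [e1 e2 hD']].
  have ex : x' = x by apply: val_inj.
  subst x'.
  have [e [he h1 h2 hr]] := IH x y' ltac:(lia) hD'.
  exists e; split => //; first lia.
  rewrite hr e2 rk_stepc; move: hD => /andP[_ h].
  by rewrite (_ : ((s^-1)%g y < x) = false) //; lia.
exists (x, y); split => //.
by rewrite ess_mem /= hD hd hr.
Qed.

Lemma walk s (x y : 'I_n) : Dg s x y ->
  exists e, [/\ e \in ess s, x <= e.1, y <= e.2 & rk s e.1 e.2 = rk s x y].
Proof. exact: (@walk_aux s (2 * n) x y ltac:(lia)). Qed.

Lemma rect0 s (a b x y : 'I_n) : Dg s a b -> rk s a b = 0 -> x <= a -> y <= b ->
  Dg s x y.
Proof.
move=> /andP[h1 h2] hr hx hy.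
have nodot : forall k : 'I_n, k < a -> b <= s k.
  move=> k hk; rewrite leqNgt; apply/negP => hk2.
  have : k \in [set k : 'I_n | (k < a) && (s k < b)] by rewrite inE hk hk2.
  by move: hr; rewrite /rk => /eqP; rewrite cards_eq0 => /eqP ->; rewrite inE.
apply/andP; split.
- case: (ltngtP x a) => hxa; [|lia|].
  + have := nodot x hxa.
    have : s x != b.
      apply/negP => /eqP e; move: h2; rewrite -e permKV'; lia.
    move=> hne hle; have : (s x : nat) != b by [].
    lia.
  + have -> : x = a by apply: val_inj. lia.
- rewrite ltnNge; apply/negP => hle.
  move: hle; set k := (s^-1)%g y => hle.
  case: (ltngtP k a) => hka.
  + have := nodot k hka; rewrite /k permVK => hb.
    have eb : y = b by apply: val_inj => /=; lia.
    move: hka; rewrite /k eb; lia.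
  + lia.
  + have e : k = a by apply: val_inj.
    move: h1; rewrite -e /k permVK; lia.
Qed.

Lemma rk0_le s i j i' j' : rk s i' j' = 0 -> i <= i' -> j <= j' -> rk s i j = 0.
Proof. move=> h hi hj; have := rk_mono s hi hj; lia. Qed.

End General.


Section Chains.
Variable n : nat.
Implicit Types s : 'S_n.

Definition chain s k (g : nat -> 'I_n) :=
  forall a b, a < b -> b < k -> g a < g b /\ s (g a) < s (g b).

Lemma containsP s k : 0 < k ->
  contains s (incr_pat k) <-> exists g, chain s k g.
Proof.
move=> k0; rewrite /incr_pat; have hsz : size (iota 1 k) = k by rewrite size_iota.
split.
- case=> F [h1 h2].
  have x0 : 'I_(size (iota 1 k)) by apply: (@Ordinal _ 0); rewrite hsz.
  exists (fun a => F (insubd x0 a)) => a b hab hbk.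
  have ea : val (insubd x0 a) = a.
    by rewrite val_insubd (_ : a < size (iota 1 k) = true) // hsz; lia.
  have eb : val (insubd x0 b) = b.
    by rewrite val_insubd (_ : b < size (iota 1 k) = true) // hsz; lia.
  have hlt : insubd x0 a < insubd x0 b by rewrite ea eb.
  split; first exact: h1.
  rewrite h2 /incr_pat !nth_iota -?hsz ?ea ?eb //; lia.
- case=> g hg.
  exists (fun a => g a); split.
  + move=> a b hab; have hb : (b : nat) < k := leq_trans (ltn_ord b) (eq_leq hsz).
    by case: (hg a b hab hb).
  + move=> a b; have hb : (b : nat) < k := leq_trans (ltn_ord b) (eq_leq hsz).
    have ha : (a : nat) < k := leq_trans (ltn_ord a) (eq_leq hsz).
    rewrite /incr_pat !nth_iota //.
    case: (ltngtP a b) => hab.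
    * by case: (hg a b hab hb) => _ ->; rewrite add1n ltnS hab.
    * case: (hg b a hab ha) => _ h; symmetry; apply/idP/idP.
      by move=> H; exfalso; move: H hab; clear; lia.
      by move=> H; exfalso; move: H h; clear; lia.
    * have -> : a = b by apply: val_inj.
      by rewrite !ltnn.
Qed.

Definition incr s (S : {set 'I_n}) :=
  forall x y, x \in S -> y \in S -> x < y -> s x < s y.

Lemma chain_ext s (S : {set 'I_n}) k : incr s S -> 0 < k -> k <= #|S| ->
  exists g, chain s k g.
Proof.
move=> hS k0 hk.
have hsz : size (enum S) = #|S| by rewrite cardE.
have [x0 _] : exists x0, x0 \in S.
  have : 0 < #|S| by lia.
  by rewrite card_gt0 => /set0Pn.
have hsort : sorted (relpre val ltn) (enum S).
  rewrite /enum_mem; apply: sorted_filter; first by move=> ? ? ?; apply: ltn_trans.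
  rewrite -sorted_map -enumT val_enum_ord; exact: iota_ltn_sorted.
exists (fun a => nth x0 (enum S) a) => a b hab hbk.
have hlt : nth x0 (enum S) a < nth x0 (enum S) b.
  have := @sorted_ltn_nth _ (relpre val ltn) ltac:(move=> ? ? ?; apply: ltn_trans) x0 _ hsort a b.
  rewrite !inE hsz; apply; lia.
split => //; apply: hS => //; rewrite -mem_enum; apply: mem_nth; rewrite hsz; lia.
Qed.

Definition up s (x : 'I_n) := #|[set m : 'I_n | (x < m) && (s x < s m)]|.
Definition lo s (x : 'I_n) := #|[set m : 'I_n | (x < m) && (s m < s x)]|.

Lemma chain_bound s k g t : chain s k g -> t < k -> k - t.+1 <= up s (g t).
Proof.
move=> hg ht.
pose h := fun b : 'I_(k - t.+1) => g (t.+1 + b).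
have hinj : injective h.
  move=> b1 b2 e; apply: val_inj => /=.
  case: (ltngtP b1 b2) => // hb; exfalso.
  + have := hg (t.+1 + b1) (t.+1 + b2) ltac:(lia).
    have := ltn_ord b2; move=> hb2 /(_ ltac:(lia)) [].
    by rewrite /h in e; rewrite e ltnn.
  + have := hg (t.+1 + b2) (t.+1 + b1) ltac:(lia).
    have := ltn_ord b1; move=> hb1 /(_ ltac:(lia)) [].
    by rewrite /h in e; rewrite e ltnn.
rewrite -{1}(card_ord (k - t.+1)) -(card_imset _ hinj).
apply: subset_leq_card; apply/subsetP => x /imsetP [b _ ->]; rewrite inE /h.
have := ltn_ord b => hb.
by case: (hg t (t.+1 + b) ltac:(lia) ltac:(lia)) => -> ->.
Qed.

Lemma card_lt (m : nat) : m <= n -> #|[set v : 'I_n | v < m]| = m.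
Proof.
move=> hm.
have hinj : injective (widen_ord hm) by move=> a b /(congr1 val) /= e; apply: val_inj.
rewrite -{2}(card_ord m) -(card_imset _ hinj); apply: eq_card => v; rewrite inE; apply/idP/imsetP.
- by move=> hv; exists (Ordinal hv) => //; apply: val_inj.
- by case=> b _ ->; rewrite /= ltn_ord.
Qed.

Lemma card_gt (i : nat) : i < n -> #|[set m : 'I_n | i < m]| = n - i.+1.
Proof.
move=> hi.
have hb : forall b : 'I_(n - i.+1), i.+1 + b < n.
  by move=> b; have := ltn_ord b; lia.
pose h := fun b : 'I_(n - i.+1) => Ordinal (hb b).
have hinj : injective h by move=> a b /(congr1 val) /= e; apply: val_inj => /=; lia.
rewrite -(card_ord (n - i.+1)) -(card_imset _ hinj); apply: eq_card => v; rewrite inE; apply/idP/imsetP.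
- move=> hv; have hv' : v - i.+1 < n - i.+1 by have := ltn_ord v; lia.
  exists (Ordinal hv') => //; apply: val_inj => /=; lia.
- by case=> b _ ->; rewrite /=; lia.
Qed.

Lemma lo_up s (x : 'I_n) : lo s x + up s x = n - x.+1.
Proof.
rewrite /lo /up -cardsUI.
have -> : [set m : 'I_n | (x < m) && (s m < s x)] :&: [set m : 'I_n | (x < m) && (s x < s m)] = set0.
  apply/setP => m; rewrite !inE; apply/negbTE; apply/negP => /andP[/andP[_ h1] /andP[_ h2]]; lia.
rewrite cards0 addn0 -(card_gt (ltn_ord x)); apply: eq_card => m; rewrite !inE.
case: (ltnP x m) => hm //=.
have : s m != s x by apply/negP => /eqP /perm_inj e; move: hm; rewrite e ltnn.
move=> hne; have : (s m : nat) != s x by [].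
lia.
Qed.

Lemma row_lo s (x : 'I_n) : #|[set y : 'I_n | Dg s x y]| = lo s x.
Proof.
rewrite /lo; symmetry; rewrite -(card_imset _ (@perm_inj _ s)); apply: eq_card => y.
rewrite [RHS]inE; apply/imsetP/idP.
- case=> m; rewrite inE => /andP[h1 h2] ->.
  by rewrite /Dg permKV' h1 h2.
- case/andP => h1 h2; exists ((s^-1)%g y); last by rewrite permVK.
  by rewrite inE permVK h1 h2.
Qed.

End Chains.


Section Rect1.
Variable n : nat.
Implicit Types s : 'S_n.

Lemma rk1_dot s (a b : 'I_n) : rk s a b = 1 -> exists k : 'I_n,
  [/\ k < a, s k < b & forall x : 'I_n, x < a -> s x < b -> x = k].
Proof.
move/eqP/cards1P => [k hk].
have : k \in [set m : 'I_n | (m < a) && (s m < b)] by rewrite hk set11.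
rewrite inE => /andP[h1 h2]; exists k; split => // x hx1 hx2.
have : x \in [set m : 'I_n | (m < a) && (s m < b)] by rewrite inE hx1 hx2.
by rewrite hk inE => /eqP.
Qed.

Lemma rect1 s (a b : 'I_n) : Dg s a b -> rk s a b = 1 -> exists k : 'I_n, [/\ k < a, s k < b,
  (forall x y : 'I_n, x <= a -> y <= b ->
     Dg s x y = ~~ ((x == k) && (s k <= y)) && ~~ ((y == s k) && (k <= x))) &
  (forall i j, i <= a -> j <= b -> rk s i j = ((k < i) && (s k < j)))].
Proof.
move=> hD hr; have [k [hk1 hk2 hu]] := rk1_dot hr.
move: hD => /andP[h1 h2].
exists k; split => //.
- move=> x y hx hy; rewrite /Dg; congr andb.
  + case: (eqVneq x k) => [->|hne] /=; first by rewrite -ltnNge.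
    have : b < s x.
      case: (ltngtP x a) => hxa; [|lia|].
      * case: (ltngtP (s x) b) => hb.
        -- by have := hu x hxa hb; move: hne => /eqP.
        -- done.
        -- have e : s x = b by apply: val_inj.
           move: h2; rewrite -e permKV'; lia.
      * have -> : x = a by apply: val_inj. done.
    lia.
  + case: (eqVneq y (s k)) => [->|hne] /=; first by rewrite permKV' -ltnNge.
    have : a < (s^-1)%g y.
      set z := (s^-1)%g y.
      have ez : s z = y by rewrite /z permVK.
      case: (ltngtP z a) => hza //.
      * case: (ltngtP y b) => hyb.
        -- have := hu z hza; rewrite ez => /(_ hyb) e; move: hne; rewrite -ez e eqxx //.
        -- lia.
        -- have e : y = b by apply: val_inj.
           move: h2; rewrite -e -/z; lia.
      * have e : z = a by apply: val_inj.
        move: h1; rewrite -e ez; lia.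
    lia.
- move=> i j hi hj; rewrite /rk.
  have -> : [set m : 'I_n | (m < i) && (s m < j)] =
            [set m : 'I_n | (m == k) && ((k < i) && (s k < j))].
    apply/setP => m; rewrite !inE.
    case: (eqVneq m k) => [->|hne] //=.
    apply/negbTE/negP => /andP[hm1 hm2].
    have := hu m ltac:(lia) ltac:(lia); move: hne => /eqP //.
  case: ((k < i) && (s k < j)).
  + rewrite (_ : [set m : 'I_n | (m == k) && true] = [set k]) ?cards1 //.
    by apply/setP => m; rewrite !inE andbT.
  + rewrite (_ : [set m : 'I_n | (m == k) && false] = set0) ?cards0 //.
    by apply/setP => m; rewrite !inE andbF.
Qed.

Lemma rect1n s (a b : 'I_n) : Dg s a b -> rk s a b = 1 -> exists k : 'I_n, [/\ k < a, s k < b,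
  (forall u v : nat, u <= a -> v <= b ->
     inD s u v = ~~ ((u == k) && (s k <= v)) && ~~ ((v == s k) && (k <= u))) &
  (forall i j, i <= a -> j <= b -> rk s i j = ((k < i) && (s k < j)))].
Proof.
move=> hD hr; have [k [h1 h2 h3 h4]] := rect1 hD hr.
exists k; split => // u v hu hv.
have hu' : u < n by have := ltn_ord a; lia.
have hv' : v < n by have := ltn_ord b; lia.
have := inD_ord s (Ordinal hu') (Ordinal hv'); rewrite /= => ->.
by rewrite h3.
Qed.

End Rect1.


Section Schr.
Variable n : nat.
Variable p : 'S_n.
Hypothesis hS : schroder p.

Lemma no4 (a b c d : 'I_n) : a < b -> b < c -> c < d ->
  p a < p d -> p b < p d -> p d < p c -> False.
Proof.
move=> hab hbc hcd had hbd hdc.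
case: hS => h1 h2.
pose f := fun u : 'I_4 => nth a [:: a; b; c; d] u.
have hmono : forall u v : 'I_4, u < v -> f u < f v.
  by move=> [[|[|[|[|u]]]] hu] [[|[|[|[|v]]]] hv] /= huv; rewrite /f /=; lia.
case: (ltnP (p a) (p b)) => hpab.
- apply: h1; exists f; split; first exact: hmono.
  by move=> [[|[|[|[|u]]]] hu] [[|[|[|[|v]]]] hv]; move: hu hv => /= hu hv; rewrite /f /=; lia.
- apply: h2; exists f; split; first exact: hmono.
  have hpab' : p b < p a.
    have : p a != p b by apply/negP => /eqP /perm_inj e; move: hab; rewrite e ltnn.
    move=> hne; have : (p a : nat) != p b by []. lia.
  by move=> [[|[|[|[|u]]]] hu] [[|[|[|[|v]]]] hv]; move: hu hv => /= hu hv; rewrite /f /=; lia.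
Qed.


Lemma rk_le1 (a b : 'I_n) : Dg p a b -> rk p a b <= 1.
Proof.
move=> /andP[h1 h2]; rewrite leqNgt; apply/negP => hr.
set A := [set m : 'I_n | (m < a) && (p m < b)].
have : 0 < #|A| by rewrite /rk -/A in hr; lia.
rewrite card_gt0 => /set0Pn [k1 hk1].
have : 0 < #|A :\ k1| by move: hr; rewrite /rk -/A (cardsD1 k1) hk1; lia.
rewrite card_gt0 => /set0Pn [k2]; rewrite !inE => /andP[hne /andP[hk2a hk2b]].
move: hk1; rewrite inE => /andP[hk1a hk1b].
set d := (p^-1)%g b.
have hpd : p d = b by rewrite /d permVK.
case: (ltngtP k1 k2) => hk.
- apply: (@no4 k1 k2 a d) => //; rewrite ?hpd //.
- apply: (@no4 k2 k1 a d) => //; rewrite ?hpd //.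
- by move: hne; rewrite (_ : k2 = k1) ?eqxx //; apply: val_inj.
Qed.

Definition D0 i j := inD p i j && (rk p i j == 0).
Definition D1 i j := inD p i j && (rk p i j == 1).
Definition Mp i j := [exists e in ess_star p, (i <= e.1) && (j <= e.2)].

Lemma ess_starP (y : 'I_n * 'I_n) :
  reflect (exists2 x, x \in ess p & shift_ess p x = ((y.1 : nat), (y.2 : nat)))
          (y \in ess_star p).
Proof.
rewrite /ess_star inE; apply: (iffP existsP).
- by case=> x /andP[hx /eqP e]; exists x.
- by case=> x hx e; exists x; rewrite hx e eqxx.
Qed.

Lemma ess_rk (x : 'I_n * 'I_n) : x \in ess p -> rk p x.1 x.2 <= 1.
Proof. by rewrite ess_mem => /and3P[h _ _]; apply: rk_le1. Qed.

Lemma Mchar i j : Mp i j = D0 i j || D1 i.+1 j.+1.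
Proof.
apply/idP/idP.
- case/existsP => [[a b]] /andP[he /andP[/= hi hj]].
  case/ess_starP: he => [[c d]] hx; rewrite /shift_ess rank_rk /=.
  have hxr := ess_rk hx.
  move: (hx); rewrite ess_mem => /and3P[/= hD _ _].
  move: hxr; rewrite /= => hxr.
  case: eqP => hr [e1 e2].
  + have [k [hk1 hk2 hf hrk]] := rect1n hD hr.
    rewrite -!subn1 in e1 e2.
    case: (boolP ((k < i.+1) && (p k < j.+1))) => hc.
    * apply/orP; right; rewrite /D1 hrk ?hc ?eqxx ?andbT; try lia.
      rewrite hf; try lia.
    * apply/orP; left; rewrite /D0 hrk; try lia.
      rewrite hf; try lia.
  + have hr0 : rk p c d = 0 by lia.
    have hi' : i < n by have := ltn_ord c; lia.
    have hj' : j < n by have := ltn_ord d; lia.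
    have := rect0 hD hr0 (x := Ordinal hi') (y := Ordinal hj') ltac:(rewrite /=; lia) ltac:(rewrite /=; lia).
    rewrite -inD_ord /= => hd.
    apply/orP; left; rewrite /D0 hd /=; apply/eqP.
    apply: (rk0_le hr0); lia.
- case/orP => /andP[hd /eqP hr].
  + case/inDP: hd => x [y [ex ey hxy]].
    have [[a b] [he /= h1 h2 hre]] := walk hxy.
    apply/existsP; exists (a, b); apply/andP; split; last by apply/andP; split; rewrite /=; lia.
    apply/ess_starP; exists (a, b) => //.
    by rewrite /shift_ess rank_rk hre ex ey hr.
  + case/inDP: hd => x [y [ex ey hxy]].
    have [[a b] [he /= h1 h2 hre]] := walk hxy.
    have he1 : a.-1 < n by have := ltn_ord a; lia.
    have he2 : b.-1 < n by have := ltn_ord b; lia.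
    apply/existsP; exists (Ordinal he1, Ordinal he2); apply/andP; split; last by rewrite /=; apply/andP; split; lia.
    apply/ess_starP; exists (a, b) => //.
    by rewrite /shift_ess rank_rk hre ex ey hr.
Qed.

Lemma antichain (y1 y2 : 'I_n * 'I_n) : y1 \in ess_star p -> y2 \in ess_star p ->
  y1.1 <= y2.1 -> y1.2 <= y2.2 -> y1 = y2.
Proof.
case: y1 y2 => [a1 b1] [a2 b2] h1 h2 /= ha hb.
case/ess_starP: h1 => [[c1 d1]] hx1; case/ess_starP: h2 => [[c2 d2]] hx2.
have r1 := ess_rk hx1; have r2 := ess_rk hx2.
move: hx1 hx2 r1 r2; rewrite !ess_mem /= => /and3P[hD1 hn1 hn1'] /and3P[hD2 hn2 hn2'] r1 r2.
rewrite /shift_ess !rank_rk /= => hs2 hs1.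
suff : (c1 = c2 :> nat) /\ (d1 = d2 :> nat).
  case=> ec ed; have ec' : c1 = c2 by apply: val_inj.
  have ed' : d1 = d2 by apply: val_inj.
  subst c2 d2; move: hs1 hs2.
  by case: eqP => e1 [ea1 eb1] [ea2 eb2]; congr pair; apply: ord_inj;
    rewrite -?subn1 in ea1 eb1 ea2 eb2; lia.
move: hs1 hs2; case: (eqVneq (rk p c1 d1) 1) => e1 /= [ea1 eb1]; case: (eqVneq (rk p c2 d2) 1) => e2 /= [ea2 eb2]; rewrite -?subn1 in ea1 eb1 ea2 eb2.
-
  have [k [hk1 hk2 hf hrk]] := rect1n hD2 e2.
  have hr1 := e1; rewrite hrk in hr1; try lia.
  split.
  + case: (ltngtP c1 c2) => hc //; last lia.
    by move: hn1; rewrite hf; lia.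
  + case: (ltngtP d1 d2) => hd //; last lia.
    by move: hn1'; rewrite hf; lia.
-
  have [k [hk1 hk2 _]] := rk1_dot e1.
  have hr2 : rk p c2 d2 = 0 by lia.
  have hk : 1 <= rk p k.+1 (p k).+1 by rewrite rk_stepr ltnSn.
  move: hD2 => /andP[hD2a hD2b].
  exfalso.
  case: (leqP k.+1 c2) => hkc; case: (leqP (p k).+1 d2) => hpk.
  + have := rk_mono p hkc hpk; lia.
  + have epk : p k = d2 by apply: val_inj => /=; lia.
    move: hD2b; rewrite -epk permKV'; lia.
  + have ek : k = c2 by apply: val_inj => /=; lia.
    move: hD2a; rewrite -ek; lia.
  + have ek : k = c2 by apply: val_inj => /=; lia.
    move: hD2a; rewrite -ek; lia.
-
  have [k [hk1 hk2 hf hrk]] := rect1n hD2 e2.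
  have hr1 : rk p c1 d1 = 0 by lia.
  move: hD1; rewrite -inD_ord => hD1.
  move: hn1 hn1' hD1 hr1; rewrite !hf ?hrk; lia.
-
  have hr2 : rk p c2 d2 = 0 by lia.
  split.
  + case: (ltngtP c1 c2) => hc //; last lia.
    have hc' : c1.+1 < n by have := ltn_ord c2; lia.
    have := rect0 hD2 hr2 (x := Ordinal hc') (y := d1) ltac:(rewrite /=; lia) ltac:(lia).
    by rewrite -inD_ord /= (negbTE hn1).
  + case: (ltngtP d1 d2) => hd //; last lia.
    have hd' : d1.+1 < n by have := ltn_ord d2; lia.
    have := rect0 hD2 hr2 (x := c1) (y := Ordinal hd') ltac:(lia) ltac:(rewrite /=; lia).
    by rewrite -inD_ord /= (negbTE hn1').
Qed.

End Schr.


Section Code.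
Variable n : nat.
Implicit Types s t : 'S_n.

Definition rowc s (x : 'I_n) := #|[set y : 'I_n | Dg s x y]|.

Lemma rowc_lt s (x : 'I_n) : rowc s x < n - x.
Proof. rewrite /rowc row_lo; have := lo_up s x; have := ltn_ord x; lia. Qed.

Lemma card_family_lt : #|[set f : {ffun 'I_n -> 'I_n} | [forall x, f x < n - x]]| = n`!.
Proof.
rewrite -ffactnn ffact_prod.
have := @card_family _ (fun _ : 'I_n => 'I_n) (fun x : 'I_n => [pred y : 'I_n | y < n - x]).
move=> h.
have -> : #|[set f : {ffun 'I_n -> 'I_n} | [forall x, f x < n - x]]| = #|(family (fun x : 'I_n => [pred y : 'I_n | y < n - x]) : simpl_pred {dffun forall x : 'I_n, 'I_n})|.
  apply: eq_card => f; rewrite inE; apply/forallP/familyP => H x; have := H x; rewrite ?inE //.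
rewrite h.
have hf : forall (s : seq 'I_n) (g : 'I_n -> nat), foldr muln 1 [seq g x | x <- s] = \prod_(x <- s) g x.
  by move=> s g; elim: s => [|x s IH]; rewrite ?big_nil ?big_cons //= IH.
rewrite hf big_enum /=; apply: eq_bigr => x _.
transitivity #|[set v : 'I_n | v < n - x]|; last exact: card_lt (leq_subr x n).
by apply: eq_card => y; rewrite !inE.
Qed.

Lemma row_char s (x : 'I_n) (y : 'I_n) :
  Dg s x y = (y < s x) && [forall z : 'I_n, (z < x) ==> (s z != y)].
Proof.
rewrite /Dg; case hy: (y < s x) => //=.
apply/idP/forallP.
- move=> h z; apply/implyP => hz; apply/negP => /eqP e.
  by move: h; rewrite -e permKV'; lia.
- move=> h; rewrite ltnNge; apply/negP => hle.
  case: (ltngtP ((s^-1)%g y) x) => hc.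
  + by have := h ((s^-1)%g y); rewrite hc permVK eqxx.
  + lia.
  + have e : (s^-1)%g y = x by apply: val_inj.
    by move: hy; rewrite -e permVK ltnn.
Qed.

Lemma rowc_inj s t : (forall x, rowc s x = rowc t x) -> s = t.
Proof.
move=> hc.
suff : forall i (x : 'I_n), x < i -> s x = t x.
  by move=> h; apply/permP => x; apply: (h n x (ltn_ord x)).
elim=> [|i IH] x hx; first by [].
case: (ltngtP x i) => hxi; [exact: IH| lia |].
have hpre : forall z : 'I_n, z < x -> s z = t z by move=> z hz; apply: IH; lia.
have key : forall s1 s2 : 'S_n, (forall z : 'I_n, z < x -> s1 z = s2 z) ->
    s1 x < s2 x -> rowc s1 x < rowc s2 x.
  move=> s1 s2 hp hlt; rewrite /rowc; apply: proper_card; apply/properP; split.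
  - apply/subsetP => y; rewrite !inE !row_char => /andP[h1 /forallP h2].
    apply/andP; split; first lia.
    apply/forallP => z; apply/implyP => hz; have := h2 z; rewrite hz hp //.
  - exists (s1 x); rewrite !inE !row_char ?ltnn //=.
    rewrite hlt /=; apply/forallP => z; apply/implyP => hz.
    rewrite -hp //; apply/negP => /eqP /perm_inj e; move: hz; rewrite e ltnn //.
have hs : forall z : 'I_n, z < x -> t z = s z by move=> z hz; rewrite hpre.
case: (ltngtP (s x) (t x)) => h.
- by have := key s t hpre h; rewrite hc ltnn.
- by have := key t s hs h; rewrite hc ltnn.
- exact: val_inj.
Qed.

Lemma code_surj (c : 'I_n -> nat) : (forall x, c x < n - x) ->
  exists s : 'S_n, forall x, rowc s x = c x.
Proof.
move=> hc.
pose F := [set f : {ffun 'I_n -> 'I_n} | [forall x, f x < n - x]].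
pose code := fun s : 'S_n => [ffun x : 'I_n => insubd x (rowc s x)].
have hcode : forall s x, (code s x : nat) = rowc s x.
  move=> s x; rewrite /code ffunE val_insubd.
  have := rowc_lt s x; case: ifP => //; lia.
have hinj : injective code.
  move=> s t e; apply: rowc_inj => x; rewrite -!hcode e //.
have hsub : code @: setT \subset F.
  apply/subsetP => f /imsetP [s _ ->]; rewrite inE; apply/forallP => x.
  rewrite hcode; exact: rowc_lt.
have heq : code @: setT = F.
  apply/eqP; rewrite eqEcard hsub /= card_family_lt card_imset // cardsT.
  by rewrite card_Sn.
pose f := [ffun x : 'I_n => insubd x (c x)].
have hf : forall x, (f x : nat) = c x.
  move=> x; rewrite /f ffunE val_insubd.
  have := hc x; case: ifP => //; lia.
have : f \in F by rewrite inE; apply/forallP => x; rewrite hf hc.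
rewrite -heq => /imsetP [s _ e]; exists s => x.
by rewrite -hcode -e hf.
Qed.

End Code.


Section Gen2.
Variable n : nat.
Implicit Types s : 'S_n.

Lemma inD_bound s i j : inD s i j -> i < n /\ j < n.
Proof. by case/inDP => x [y [<- <- _]]; split; apply: ltn_ord. Qed.

Lemma inD_nat s i j (hi : i < n) (hj : j < n) :
  inD s i j = Dg s (Ordinal hi) (Ordinal hj).
Proof. by rewrite -inD_ord. Qed.

Lemma rk_gt0P s i j : reflect (exists a : 'I_n, a < i /\ s a < j) (0 < rk s i j).
Proof.
rewrite /rk card_gt0; apply: (iffP (set0Pn _)).
- by case=> a; rewrite inE => /andP[h1 h2]; exists a.
- by case=> a [h1 h2]; exists a; rewrite inE h1 h2.
Qed.

Lemma rk0_nodot s i j (a : 'I_n) : rk s i j = 0 -> a < i -> j <= s a.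
Proof.
move=> h ha; rewrite leqNgt; apply/negP => hb.
have : 0 < rk s i j by apply/rk_gt0P; exists a.
lia.
Qed.

End Gen2.

Section Lam.
Variable n : nat.
Variable p : 'S_n.
Hypothesis hS : schroder p.

Lemma argmin_ex (i : nat) : i < n ->
  exists m : 'I_n, m <= i /\ forall a : 'I_n, a <= i -> p m <= p a.
Proof.
elim: i => [|i IH] hi.
  exists (Ordinal hi); split => // a ha.
  by have -> : a = Ordinal hi by apply: ord_inj => /=; lia.
have [m [hm1 hm2]] := IH (ltnW hi).
case: (leqP (p m) (p (Ordinal hi))) => hc.
- exists m; split; first lia.
  move=> a ha; case: (ltngtP a i.+1) => h.
  + apply: hm2; lia.
  + lia.
  + by have -> : a = Ordinal hi by apply: val_inj.
- exists (Ordinal hi); split => //= a ha; case: (ltngtP a i.+1) => h.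
  + have := hm2 a ltac:(lia); lia.
  + lia.
  + by have -> : a = Ordinal hi by apply: val_inj.
Qed.

Lemma R0 (i : nat) (m : 'I_n) : i < n -> m <= i -> (forall a : 'I_n, a <= i -> p m <= p a) ->
  forall j, D0 p i j = (j < p m).
Proof.
move=> hi hm hmin j; apply/idP/idP.
- case/andP => hd /eqP hr.
  case/inDP: hd => x [y [ex ey /andP[h1 h2]]].
  case: (ltngtP m i) => hmi; [|lia|].
  + have := rk0_nodot hr hmi; rewrite -ey => hle.
    case: (ltngtP (p m) y) => e //; first lia.
    have e' : p m = y by apply: val_inj.
    by move: h2; rewrite -e' permKV'; lia.
  + have e : m = x by apply: ord_inj; lia.
    by rewrite e -ey.
- move=> hj.
  have hj' : j < n by have := ltn_ord (p m); lia.
  rewrite /D0 (inD_nat p hi hj'); apply/andP; split.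
  + apply/andP; split => /=.
    * have := hmin (Ordinal hi) (leqnn _); lia.
    * rewrite ltnNge; apply/negP => hz.
      have := hmin _ hz; rewrite permVK /=; lia.
  + apply/eqP; apply/eqP; rewrite eqn0Ngt; apply/negP => /rk_gt0P [a [ha1 ha2]].
    have := hmin a ltac:(lia); lia.
Qed.

Lemma R1 (c : 'I_n) (m : 'I_n) : 0 < c -> m <= c.-1 ->
  (forall a : 'I_n, a <= c.-1 -> p m <= p a) ->
  forall j, D1 p c j = inD p c j && (p m < j).
Proof.
move=> hc hm hmin j; rewrite /D1.
case hd: (inD p c j) => //=.
have hle : rk p c j <= 1.
  case/inDP: hd => x [y [ex ey hxy]]; rewrite -ex -ey; exact: rk_le1.
apply/idP/idP.
- move=> /eqP hr; have : 0 < rk p c j by lia.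
  case/rk_gt0P => a [ha1 ha2]; have := hmin a ltac:(lia); lia.
- move=> hlt; have : 0 < rk p c j by apply/rk_gt0P; exists m; split => //; lia.
  lia.
Qed.

Definition lam i := #|[set j : 'I_n | Mp p i j]|.

Lemma F1 (c a : 'I_n) : a < c -> p a < p c ->
  lam c.-1 = #|[set j : 'I_n | Dg p c j]|.
Proof.
move=> hac hpac.
have hc0 : 0 < c by lia.
have [m [hm hmin]] := argmin_ex (leq_ltn_trans (leq_pred c) (ltn_ord c)).
have hMp : forall j, Mp p c.-1 j = (j < p m) || (inD p c j.+1 && (p m < j.+1)).
  move=> j; rewrite Mchar // (R0 _ hm hmin); last by have := ltn_ord c; lia.
  by rewrite (_ : (c.-1).+1 = c) ?(R1 hc0 hm hmin) //; lia.
have hmu : p m < p c by have := hmin a ltac:(lia); lia.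
have hlow : forall j : 'I_n, j < p m -> Dg p c j.
  move=> j hj; apply/andP; split; first lia.
  rewrite ltnNge; apply/negP => hz.
  case: (ltngtP ((p^-1)%g j) c) => h.
  + have := hmin ((p^-1)%g j) ltac:(lia); rewrite permVK; lia.
  + lia.
  + have e : (p^-1)%g j = c by apply: val_inj.
    by move: hmu; rewrite -e permVK; lia.
have hnmu : ~~ Dg p c (p m).
  by apply/negP => /andP[_]; rewrite permKV'; lia.
pose h := fun j : 'I_n => if j < p m then j else insubd j j.+1.
have hA : forall j : 'I_n, j \in [set j0 : 'I_n | Mp p c.-1 j0] -> (j < p m) || (inD p c j.+1 && (p m < j.+1)).
  by move=> j; rewrite inE hMp.
rewrite /lam -(card_in_imset (f := h)).
- apply: eq_card => j; apply/imsetP/idP.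
  + case=> j' hj' ->; move/hA: hj'; rewrite /h; case: ifP => hlt /=.
    * by rewrite inE hlow.
    * move=> /andP[hd _]; have [_ hb] := inD_bound hd.
      by rewrite inE -inD_ord val_insubd hb.
  + rewrite inE => hd.
    case: (ltngtP j (p m)) => hj.
    * by exists j; rewrite ?inE ?hMp ?hj // /h hj.
    * have hj1 : j.-1 < n by have := ltn_ord j; lia.
      exists (Ordinal hj1).
      -- rewrite inE hMp /=; apply/orP; right; rewrite (_ : j.-1.+1 = j) ?inD_ord ?hd //=; lia.
      -- rewrite /h /= ifF; last lia.
         have e : j.-1.+1 = j by lia.
         by apply: val_inj; rewrite val_insubd /= e ltn_ord.
    * have e : j = p m by apply: val_inj.
      by move: hd; rewrite e (negbTE hnmu).
- move=> j1 j2 /hA h1 /hA h2; rewrite /h.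
  case: ifP => c1; case: ifP => c2 //.
  + move=> e; move: h2 => /orP[|/andP[hd _]]; first lia.
    have [_ hb] := inD_bound hd.
    move/(congr1 val): e; rewrite val_insubd /= hb; lia.
  + move=> e; move: h1 => /orP[|/andP[hd _]]; first lia.
    have [_ hb] := inD_bound hd.
    move/(congr1 val): e; rewrite val_insubd /= hb; lia.
  + move: h1 h2 => /orP[|/andP[hd1 _]]; first lia.
    move=> /orP[|/andP[hd2 _]]; first lia.
    have [_ hb1] := inD_bound hd1; have [_ hb2] := inD_bound hd2.
    move/(congr1 val); rewrite !val_insubd hb1 hb2 => e; apply: ord_inj; lia.
Qed.

End Lam.


Section Lam2.
Variable n : nat.
Variable p : 'S_n.
Hypothesis hS : schroder p.

Lemma cnt_below (i : nat) (m : 'I_n) : i < n -> m <= i ->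
  (forall a : 'I_n, a <= i -> p m <= p a) ->
  #|[set x : 'I_n | (i < x) && (p x < p m)]| = p m.
Proof.
move=> hi hm hmin.
transitivity #|[set p x | x in [set x : 'I_n | (i < x) && (p x < p m)]]|.
  by rewrite card_imset //; exact: perm_inj.
transitivity #|[set v : 'I_n | v < p m]|; last exact: card_lt (ltnW (ltn_ord _)).
apply: eq_card => v; rewrite [RHS]inE; apply/imsetP/idP.
- by case=> x; rewrite inE => /andP[_ h] ->.
- move=> hv; exists ((p^-1)%g v); last by rewrite permVK.
  rewrite inE permVK hv andbT ltnNge; apply/negP => hz.
  have := hmin _ hz; rewrite permVK; lia.
Qed.

Lemma cnt_above (i : nat) (m : 'I_n) : i < n -> m <= i ->
  (forall a : 'I_n, a <= i -> p m <= p a) ->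
  #|[set x : 'I_n | (i < x) && (p m < p x)]| = n - i.+1 - p m.
Proof.
move=> hi hm hmin.
have h1 := cnt_below hi hm hmin.
have h2 := card_gt hi.
have hU := cardsUI [set x : 'I_n | (i < x) && (p x < p m)] [set x : 'I_n | (i < x) && (p m < p x)].
have e1 : [set x : 'I_n | (i < x) && (p x < p m)] :&: [set x : 'I_n | (i < x) && (p m < p x)] = set0.
  by apply/setP => x; rewrite !inE; apply/negbTE/negP => /andP[/andP[_ h3] /andP[_ h4]]; lia.
have e2 : [set x : 'I_n | (i < x) && (p x < p m)] :|: [set x : 'I_n | (i < x) && (p m < p x)] =
          [set x : 'I_n | i < x].
  apply/setP => x; rewrite !inE; case: (ltnP i x) => hx //=.
  have : p x != p m by apply/negP => /eqP /perm_inj e; move: hx; rewrite e; lia.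
  move=> hne; have : (p x : nat) != p m by []. lia.
rewrite e1 e2 cards0 in hU; lia.
Qed.

Lemma F2 (i : nat) (hc : i.+1 < n) (m : 'I_n) : m <= i ->
  (forall a : 'I_n, a <= i -> p m <= p a) ->
  (forall a : 'I_n, a <= i -> p (Ordinal hc) < p a) ->
  lam p i = p m.
Proof.
move=> hm hmin hlr.
have hi : i < n by lia.
have hc0 : 0 < Ordinal hc by [].
have hm' : m <= (Ordinal hc).-1 by [].
rewrite /lam; transitivity #|[set v : 'I_n | v < p m]|; last exact: card_lt (ltnW (ltn_ord _)).
apply: eq_card => j; rewrite !inE.
rewrite Mchar // (R0 hi hm hmin) (_ : i.+1 = Ordinal hc) // (R1 hS hc0 hm' hmin).
case: (ltnP j (p m)) => hj //=.
apply/negbTE/negP => /andP[hd _].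
have [_ hb] := inD_bound hd.
have hd' : Dg p (Ordinal hc) (Ordinal hb) by rewrite -inD_nat; exact: hd.
move: hd' => /andP[h1 _].
have := hlr m hm; move: h1; rewrite /=; lia.
Qed.

Lemma lam_last : 0 < n -> lam p n.-1 = 0.
Proof.
move=> n0.
have hi : n.-1 < n by lia.
have [m [hm hmin]] := argmin_ex p hi.
have hm0 : p m = 0 :> nat.
  have := hmin ((p^-1)%g (Ordinal n0)) ltac:(have := ltn_ord ((p^-1)%g (Ordinal n0)); lia).
  rewrite permVK /=; lia.
apply/eqP; rewrite cards_eq0; apply/eqP/setP => j; rewrite !inE.
rewrite Mchar // (R0 hi hm hmin) hm0 /=.
apply/negbTE/negP => /andP[hd _]; have [hb _] := inD_bound hd; lia.
Qed.

Lemma lam_lt (x : 'I_n) : lam p x < n - x.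
Proof.
case: (ltnP x.+1 n) => hc.
- have hx : (x : nat) = (Ordinal hc).-1 by [].
  have [m [hm hmin]] := argmin_ex p (ltn_ord x).
  case: (boolP [exists a : 'I_n, (a <= x) && (p a < p (Ordinal hc))]).
  + case/existsP => a /andP[ha1 ha2].
    rewrite hx (F1 hS (c := Ordinal hc) (a := a)) /=; try lia.
    rewrite row_lo; have := lo_up p (Ordinal hc); rewrite /=; lia.
  + move=> hn.
    have hlr : forall a : 'I_n, a <= x -> p (Ordinal hc) < p a.
      move=> a ha; case: (ltngtP (p a) (p (Ordinal hc))) => h //.
      * by move: hn; rewrite negb_exists => /forallP /(_ a); rewrite ha h.
      * have := perm_inj (val_inj h) => e; move: ha; rewrite e /=; lia.
    rewrite (F2 (hc := hc) hm hmin hlr) -(cnt_below (ltn_ord x) hm hmin).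
    have := card_gt (ltn_ord x); move=> hg.
    have : #|[set x0 : 'I_n | (x < x0) && (p x0 < p m)]| <= #|[set m0 : 'I_n | x < m0]|.
      by apply: subset_leq_card; apply/subsetP => y; rewrite !inE => /andP[-> _].
    lia.
- have hx : (x : nat) = n.-1 by have := ltn_ord x; lia.
  rewrite hx lam_last; have := ltn_ord x; lia.
Qed.

End Lam2.


Section Gen3.
Variable n : nat.
Implicit Types s : 'S_n.

Lemma downset_card (A : {set 'I_n}) :
  (forall y z : 'I_n, z <= y -> y \in A -> z \in A) ->
  forall y : 'I_n, (y \in A) = (y < #|A|).
Proof.
move=> hA y; apply/idP/idP => hy.
- have : [set z : 'I_n | z < y.+1] \subset A.
    by apply/subsetP => z; rewrite inE => hz; apply: (hA y) => //; lia.
  move/subset_leq_card; rewrite card_lt //; exact: ltn_ord.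
- apply/negPn/negP => hn.
  have : A \subset [set z : 'I_n | z < y].
    apply/subsetP => z hz; rewrite inE ltnNge; apply/negP => hyz.
    by move: hn; rewrite (hA z y hyz hz).
  move/subset_leq_card; rewrite card_lt; [lia | exact: ltnW (ltn_ord y)].
Qed.

Lemma row_shape s (L : 'I_n -> nat) : (forall x, rowc s x = L x) ->
  (forall x y : 'I_n, x <= y -> L y <= L x) -> forall x y : 'I_n, Dg s x y = (y < L x).
Proof.
move=> hL hmono.
suff : forall i (x : 'I_n), x < i -> forall y : 'I_n, Dg s x y = (y < L x).
  by move=> h x; apply: (h n x (ltn_ord x)).
elim=> [|i IH] x hx y; first by [].
case: (ltngtP x i) => hxi; [exact: IH| lia |].
have hz : forall z : 'I_n, z < x -> L x <= s z.
  move=> z hzx.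
  have hLz : L z < n by rewrite -hL; have := rowc_lt s z; lia.
  have := hmono z x (ltnW hzx).
  case hL0: (L z) => [|l] //; first lia.
  have hl : l < n by lia.
  have := IH z ltac:(lia) (Ordinal hl); rewrite /= hL0 ltnSn => /andP[h1 _].
  move: h1; rewrite /=; lia.
have hsx : L x <= s x.
  rewrite leqNgt; apply/negP => hlt.
  have : [set y : 'I_n | Dg s x y] \subset [set y : 'I_n | y < s x].
    by apply/subsetP => y'; rewrite !inE => /andP[].
  move/subset_leq_card; rewrite card_lt ?(ltnW (ltn_ord _)) //.
  move: (hL x); rewrite /rowc => ->; lia.
have hsub : [set y : 'I_n | y < L x] \subset [set y : 'I_n | Dg s x y].
  apply/subsetP => y'; rewrite !inE => hy; apply/andP; split; first lia.
  rewrite ltnNge; apply/negP => hle.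
  case: (ltngtP ((s^-1)%g y') x) => h.
  + have := hz _ h; rewrite permVK; lia.
  + lia.
  + have e : (s^-1)%g y' = x by apply: val_inj.
    by move: hsx; rewrite -{2}e permVK; lia.
have hLn : L x <= n by rewrite -hL; have := rowc_lt s x; lia.
have : [set y : 'I_n | y < L x] = [set y : 'I_n | Dg s x y].
  apply/eqP; rewrite eqEcard hsub /= card_lt //; move: (hL x); rewrite /rowc => ->; lia.
by move/setP => /(_ y); rewrite !inE => ->.
Qed.

End Gen3.

Section Exist.
Variable n : nat.
Variable p : 'S_n.
Hypothesis hS : schroder p.

Lemma Mp_down i i' j j' : Mp p i j -> i' <= i -> j' <= j -> Mp p i' j'.
Proof.
case/existsP => [[a b]] /andP[he /andP[/= h1 h2]] hi hj.
apply/existsP; exists (a, b); rewrite he /=; apply/andP; split; lia.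
Qed.

Lemma Mp_bound i j : Mp p i j -> i < n /\ j < n.
Proof.
case/existsP => [[a b]] /andP[_ /andP[/= h1 h2]].
by split; [have := ltn_ord a | have := ltn_ord b]; lia.
Qed.

Lemma Mp_row (x y : 'I_n) : Mp p x y = (y < lam p x).
Proof.
have hA : forall y' z : 'I_n, z <= y' -> y' \in [set j : 'I_n | Mp p x j] -> z \in [set j : 'I_n | Mp p x j].
  by move=> y' z hz; rewrite !inE => h; apply: (Mp_down h).
by have := downset_card hA y; rewrite inE /lam.
Qed.

Lemma lam_mono (x y : 'I_n) : x <= y -> lam p y <= lam p x.
Proof.
move=> hxy; apply: subset_leq_card; apply/subsetP => j; rewrite !inE => h.
exact: (Mp_down h).
Qed.

Lemma exists_good : exists sg : 'S_n, forall u v, inD sg u v = Mp p u v.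
Proof.
have [sg hsg] := @code_surj n (fun x => lam p x) (lam_lt hS).
exists sg => u v.
case: (boolP ((u < n) && (v < n))) => [/andP[hu hv]|hn].
- rewrite (inD_nat sg hu hv) (row_shape hsg) //; last by move=> x y; apply: lam_mono.
  by rewrite -(Mp_row (Ordinal hu) (Ordinal hv)).
- apply/idP/idP => h.
  + by have [h1 h2] := inD_bound h; move: hn; rewrite h1 h2.
  + by have [h1 h2] := Mp_bound h; move: hn; rewrite h1 h2.
Qed.

Lemma good_phi (sg : 'S_n) : (forall u v, inD sg u v = Mp p u v) -> phi_spec p sg.
Proof.
move=> hg; apply/andP; split.
- apply/eqP/setP => [[a b]]; rewrite ess_mem /= -inD_ord !hg.
  apply/idP/idP.
  + case/and3P => /existsP [[a' b'] /andP[he /andP[/= h1 h2]]] hn1 hn2.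
    have ea : (a : nat) = a'.
      case: (ltngtP a a') => h //; last lia.
      by move: hn1; rewrite (_ : Mp p a.+1 b) //; apply/existsP; exists (a', b'); rewrite he /=; apply/andP; split; lia.
    have eb : (b : nat) = b'.
      case: (ltngtP b b') => h //; last lia.
      by move: hn2; rewrite (_ : Mp p a b.+1) //; apply/existsP; exists (a', b'); rewrite he /=; apply/andP; split; lia.
    by rewrite (_ : (a, b) = (a', b')) //; congr pair; apply: val_inj.
  + move=> he; apply/and3P; split.
    * by apply/existsP; exists (a, b); rewrite he /= !leqnn.
    * apply/negP => /existsP [[a' b'] /andP[he' /andP[/= h1 h2]]].
      have := antichain hS he he' ltac:(rewrite /=; lia) ltac:(rewrite /=; lia).
      by case=> e1 e2; move: h1; rewrite -e1; lia.
    * apply/negP => /existsP [[a' b'] /andP[he' /andP[/= h1 h2]]].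
      have := antichain hS he he' ltac:(rewrite /=; lia) ltac:(rewrite /=; lia).
      by case=> e1 e2; move: h2; rewrite -e2; lia.
- apply/forallP => [[a b]]; apply/implyP; rewrite ess_mem /= => /and3P[hD _ _].
  rewrite rank_rk /=; apply/eqP/eqP; rewrite eqn0Ngt; apply/negP => /rk_gt0P [k [hk1 hk2]].
  have : inD sg k b by rewrite hg; apply: (Mp_down (i := a) (j := b)); rewrite -?hg ?inD_ord //; lia.
  rewrite inD_ord => /andP[h _]; lia.
Qed.

Lemma phi_good (sg : 'S_n) : phi_spec p sg -> forall u v, inD sg u v = Mp p u v.
Proof.
case/andP => /eqP he /forallP hr u v; apply/idP/idP.
- case/inDP => x [y [ex ey hxy]].
  have [[a b] [he' /= h1 h2 _]] := walk hxy.
  apply/existsP; exists (a, b); rewrite -he he' /=; apply/andP; split; lia.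
- case/existsP => [[a b]] /andP[he' /andP[/= h1 h2]].
  move: he'; rewrite -he => he'.
  have := hr (a, b); rewrite he' /= rank_rk => /eqP hr0.
  move: (he'); rewrite ess_mem => /and3P[hD _ _].
  have hu : u < n by have := ltn_ord a; lia.
  have hv : v < n by have := ltn_ord b; lia.
  rewrite (inD_nat sg hu hv); apply: (rect0 hD hr0) => /=; lia.
Qed.

End Exist.


Section Incr.
Variable n : nat.
Implicit Types s : 'S_n.

Lemma incr_add s (x : 'I_n) (A : {set 'I_n}) : incr s A ->
  (forall y, y \in A -> x < y /\ s x < s y) -> incr s (x |: A).
Proof.
move=> hA hx y z; rewrite !inE => /orP[/eqP ->|hy] /orP[/eqP ->|hz] hyz.
- lia.
- by case: (hx z hz).
- by case: (hx y hy) => h _; lia.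
- exact: hA.
Qed.

Lemma contains1 s : contains s (incr_pat 1) <-> (0 < n).
Proof.
rewrite containsP //; split.
- by case=> g _; have := ltn_ord (g 0); lia.
- by move=> hn; exists (fun _ => Ordinal hn) => a b; lia.
Qed.

Lemma card_add (x : 'I_n) (A : {set 'I_n}) : x \notin A -> #|x |: A| = #|A|.+1.
Proof. by move=> h; rewrite cardsU1 h. Qed.

End Incr.

Section Main.
Variable n : nat.
Variable p : 'S_n.
Hypothesis hS : schroder p.
Variable sg : 'S_n.
Hypothesis hg : forall u v, inD sg u v = Mp p u v.

Lemma up_sg (x : 'I_n) : up sg x = n - x.+1 - lam p x.
Proof.
have h1 := lo_up sg x.
have h2 : lo sg x = lam p x.
  rewrite -row_lo /lam; apply: eq_card => y; rewrite !inE -inD_ord hg //.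
lia.
Qed.

Lemma sg_contains k (x : 'I_n) : 0 < k -> k <= (up sg x).+1 -> contains sg (incr_pat k).
Proof.
move=> k0 hk; apply/containsP => //.
pose U := [set m : 'I_n | (x < m) && (sg x < sg m)].
apply: (@chain_ext _ _ (x |: U)) => //.
- apply: incr_add.
  + move=> y z; rewrite !inE => /andP[hy1 hy2] /andP[hz1 hz2] hyz.
    case: (ltngtP (sg y) (sg z)) => h //.
    * exfalso.
      have hD : inD sg y (sg z) by rewrite inD_ord; apply/andP; split => //; rewrite permKV'.
      rewrite hg in hD.
      have : inD sg x (sg z) by rewrite hg; apply: (Mp_down hD); lia.
      rewrite inD_ord => /andP[h' _]; lia.
    * by have := perm_inj (val_inj h) => e; move: hyz; rewrite e ltnn.
  + by move=> y; rewrite inE => /andP[].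
- rewrite card_add; last by rewrite inE ltnn.
  by move: hk; rewrite /up.
Qed.

Lemma main_equiv k : 1 <= k -> contains p (incr_pat k) <-> contains sg (incr_pat k).
Proof.
move=> hk.
case: (ltngtP k 1) => hk1; [lia| |by subst k; rewrite !contains1].
split.
- move=> /(containsP _ hk) [g hch].
  have [hac hpac] := hch 0 1 ltac:(lia) hk1.
  have hb := chain_bound hch hk1.
  have hF := F1 hS hac hpac.
  have hc : (g 1).-1 < n by have := ltn_ord (g 1); lia.
  apply: (@sg_contains k (Ordinal hc)); first lia.
  rewrite up_sg /= hF row_lo.
  have := lo_up p (g 1); have := ltn_ord (g 1); rewrite -subn1; lia.
- move=> /(containsP _ hk) [g hch].
  have hb := chain_bound hch (ltnW hk1).
  set x := g 0 in hb.
  rewrite up_sg in hb.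
  case: (ltnP x.+1 n) => hxn; last by move: hb; have := ltn_ord x; lia.
  set c := Ordinal hxn.
  have ec : (c : nat) = x.+1 by [].
  have [m [hm hmin]] := argmin_ex p (ltn_ord x).
  apply/containsP => //.
  case: (boolP [exists a : 'I_n, (a <= x) && (p a < p c)]).
  + case/existsP => a /andP[ha1 ha2].
    have hF := F1 hS (c := c) (a := a) ltac:(rewrite /=; lia) ha2.
    rewrite (_ : (x : nat) = c.-1) // hF row_lo in hb.
    have hlu := lo_up p c.
    pose U := [set y : 'I_n | (c < y) && (p c < p y)].
    apply: (@chain_ext _ _ (a |: (c |: U))) => //; last first.
      rewrite !card_add.
      * rewrite (_ : #|U| = up p c) //; move: hb hlu; rewrite /=; lia.
      * by rewrite inE ltnn.
      * rewrite !inE negb_or; apply/andP; split.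
        -- by apply/negP => /eqP e; move: ha1; rewrite e /=; lia.
        -- by apply/negP => /andP[h _]; move: h ha1; rewrite /=; lia.
    apply: incr_add; first apply: incr_add.
    * move=> y z; rewrite !inE => /andP[hy1 hy2] /andP[hz1 hz2] hyz.
      rewrite ltnNge; apply/negP => hle.
      have hne : (p y : nat) != p z by apply/negP => /eqP /ord_inj /perm_inj e; move: hyz; rewrite e ltnn.
      apply: (no4 hS (a := a) (b := c) (c := y) (d := z)); lia.
    * by move=> y; rewrite inE => /andP[].
    * move=> y; rewrite !inE => /orP[/eqP ->|/andP[h1 h2]]; rewrite /=; split; lia.
  + move=> hn.
    have hlr : forall a : 'I_n, a <= x -> p c < p a.
      move=> a ha; case: (ltngtP (p a) (p c)) => h //.
      * by move: hn; rewrite negb_exists => /forallP /(_ a); rewrite ha h.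
      * have := perm_inj (val_inj h) => e; move: ha; rewrite e /=; lia.
    have hF := F2 hS (hc := hxn) hm hmin hlr.
    rewrite hF in hb.
    have hab := cnt_above (ltn_ord x) hm hmin.
    pose U := [set y : 'I_n | (x < y) && (p m < p y)].
    apply: (@chain_ext _ _ (m |: U)) => //; last first.
      rewrite card_add; first by rewrite hab; lia.
      by rewrite inE; apply/negP => /andP[h _]; lia.
    apply: incr_add.
    * move=> y z; rewrite !inE => /andP[hy1 hy2] /andP[hz1 hz2] hyz.
      have hcm := hlr m hm.
      rewrite ltnNge; apply/negP => hle.
      have hne : (p y : nat) != p z by apply/negP => /eqP /ord_inj /perm_inj e; move: hyz; rewrite e ltnn.
      have hyc : c < y.
        case: (ltngtP y c) => e; rewrite /= in e; try lia.
        have e' : y = c by apply: ord_inj.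
        by move: hy2; rewrite e'; lia.
      apply: (no4 hS (a := m) (b := c) (c := y) (d := z)); lia.
    * by move=> y; rewrite inE => /andP[h1 h2]; split; lia.
Qed.

End Main.

Unset Implicit Arguments.

Theorem theorem3p1 (n : nat) (p : 'S_n) :
  schroder p ->
  forall k : nat, 1 <= k ->
    (avoids p (incr_pat k) <-> avoids (phi p) (incr_pat k)).
Proof.
move=> hS k hk.
have [sg hsg] := exists_good hS.
have hphi : phi_spec p (phi p).
  rewrite /phi; case: pickP => [sg' h | hn] //=.
  by have := hn sg; rewrite (good_phi hS hsg).
have hg := phi_good hphi.
have := main_equiv hS hg hk.
by rewrite /avoids => ->.
Qed.
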